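(* Let $m,n\in\mathbf{N}$. If there is a set family of shape $(m^n)$ and type $\lambda$, and $\mu$ is a partition with $\mu\rhd\lambda$ (strictly in the dominance order), then there are two distinct set families of shape $(m^n)$ and type $\mu$.
   Context: A set family of shape $(m^n)$ is a collection of $n$ distinct $m$-subsets of $\mathbf{N}=\{1,2,\dots\}$. If $\lambda$ is a partition with largest part $a$ and conjugate $\lambda'$, a set family has type $\lambda$ if for each $i\in\{1,\dots,a\}$ exactly $\lambda'_i$ of its sets contain $i$. *)

(* Defs.v *)
From mathcomp Require Import all_boot.
From mathcomp Require Import finmap.
Set Implicit Arguments. Unset Strict Implicit. Unset Printing Implicit Defensive.
Local Open Scope fset_scope.

Definition is_partition (l : seq nat) : bool :=
  sorted geq l && all (fun x => 0 < x) l.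

Definition largest_part (l : seq nat) : nat := foldr maxn 0 l.

Definition conj_part (l : seq nat) (i : nat) : nat := count (fun x => i <= x) l.

Definition dominates (mu la : seq nat) : Prop :=
  sumn mu = sumn la /\ forall k, sumn (take k la) <= sumn (take k mu).
Definition strictly_dominates (mu la : seq nat) : Prop :=
  dominates mu la /\ mu <> la.

(* A set family of shape (m^n): n distinct m-subsets of N = {1,2,...}. *)
Definition has_shape (m n : nat) (F : {fset {fset nat}}) : Prop :=
  #|` F| = n /\ forall S, S \in F -> #|` S| = m /\ 0 \notin S.

Definition has_type (la : seq nat) (F : {fset {fset nat}}) : Prop :=
  forall i, 1 <= i <= largest_part la ->
    #|` [fset S in F | i \in S]| = conj_part la i.

(* Main.v *)
Require Import Defs.
From mathcomp Require Import all_boot.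
From mathcomp Require Import finmap.
From mathcomp Require Import zify.

Lemma count_set_nth (a : pred nat) s k y : k < size s ->
  count a (set_nth 0 s k y) + a (nth 0 s k) = count a s + a y.
Proof.
elim: s k => [|x s IH] [|k] //= hk.
  lia.
have := IH k hk; lia.
Qed.

Definition mv (s : seq nat) i j :=
  set_nth 0 (set_nth 0 s i (nth 0 s i).+1) j (nth 0 s j).-1.

Lemma size_mv s i j : i < size s -> j < size s -> size (mv s i j) = size s.
Proof. by move=> hi hj; rewrite /mv !size_set_nth; lia. Qed.

Lemma nth_mv s i j k : i != j ->
  nth 0 (mv s i j) k = if k == i then (nth 0 s i).+1 else if k == j then (nth 0 s j).-1 else nth 0 s k.
Proof.
move=> ij; rewrite /mv !nth_set_nth /=.
have [->|kj] := eqVneq k j.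
  by rewrite eq_sym (negbTE ij).
by rewrite nth_set_nth.
Qed.

Lemma leS_split x a : nat_of_bool (x <= a.+1) = ((x <= a) + (x == a.+1))%N.
Proof.
case: (leqP x a) => h; first by rewrite (leq_trans h) // (_ : (x == a.+1) = false) //; apply/eqP; lia.
case: (x =P a.+1) => [->|h2]; first by rewrite leqnn.
by rewrite (_ : x <= a.+1 = false) //; apply/negbTE; rewrite -ltnNge; lia.
Qed.

Lemma leP_split x b : 0 < b -> nat_of_bool (x <= b) = ((x <= b.-1) + (x == b))%N.
Proof.
move=> b0; have := leS_split x b.-1; by rewrite prednK.
Qed.

Lemma conj_mv s i j x : i != j -> i < size s -> j < size s -> 0 < nth 0 s j -> 0 < x ->
  conj_part (mv s i j) x + (x == nth 0 s j) = conj_part s x + (x == (nth 0 s i).+1).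
Proof.
move=> ij hi hj pj x0; rewrite /conj_part /mv.
have h1 := @count_set_nth (fun y => x <= y) s i (nth 0 s i).+1 hi.
have hj' : j < size (set_nth 0 s i (nth 0 s i).+1) by rewrite size_set_nth; lia.
have h2 := @count_set_nth (fun y => x <= y) _ j (nth 0 s j).-1 hj'.
rewrite nth_set_nth /= eq_sym (negbTE ij) in h2.
move: h1 h2 => /=.
have e1 := leS_split x (nth 0 s i).
have e2 := @leP_split x _ pj.
rewrite e1 e2.
move: (nat_of_bool _) (nat_of_bool _) (nat_of_bool _) (nat_of_bool _) (count _ _) (count _ _) (count _ _).
move=> *; lia.
Qed.

Lemma count_split (a b : pred nat) s : (forall y, b y -> a y) ->
  count a s = (count b s + count (fun y => a y && ~~ b y) s)%N.
Proof.
move=> ba; elim: s => [|y s IH] //=; rewrite IH.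
case: (boolP (b y)) => hb; first by rewrite (ba _ hb) /=; lia.
by case: (a y) => /=; lia.
Qed.

Lemma conj_gap s i j : i != j -> i < size s -> j < size s -> 0 < nth 0 s j ->
  nth 0 s j <= nth 0 s i ->
  conj_part s (nth 0 s i).+1 + 2 <= conj_part s (nth 0 s j).
Proof.
move=> ij hi hj pj ji; rewrite /conj_part.
set p := nth 0 s j; set q := (nth 0 s i).+1.
rewrite (@count_split (fun y => p <= y) (fun y => q <= y)); last by move=> y /=; lia.
set c := (fun y => _ && _).
suff : 2 <= count c s by lia.
have c0 : c 0 = false by rewrite /c /=; lia.
have h1 := @count_set_nth c s i 0 hi.
have hj' : j < size (set_nth 0 s i 0) by rewrite size_set_nth; lia.
have h2 := @count_set_nth c _ j 0 hj'.
rewrite nth_set_nth /= eq_sym (negbTE ij) in h2.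
have ci : c (nth 0 s i) by rewrite /c /=; apply/andP; split; [lia | rewrite -ltnNge; lia].
have cj : c (nth 0 s j) by rewrite /c /=; apply/andP; split; [lia | rewrite -ltnNge; lia].
rewrite c0 ci in h1; rewrite c0 cj in h2; lia.
Qed.

Definition PS (s : seq nat) k := sumn (take k s).

Lemma PS_succ s k : PS s k.+1 = PS s k + nth 0 s k.
Proof.
rewrite /PS; elim: s k => [|x s IH] [|k] //=; rewrite ?take0 /=; try lia.
by rewrite IH; lia.
Qed.

Lemma PS0 s : PS s 0 = 0. Proof. by rewrite /PS take0. Qed.

Lemma PS_over s k : size s <= k -> PS s k = sumn s.
Proof. by move=> h; rewrite /PS take_oversize. Qed.

Lemma PS_mv s i j k : i != j -> i < size s -> j < size s -> 0 < nth 0 s j ->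
  PS (mv s i j) k + (j < k) = PS s k + (i < k).
Proof.
move=> ij hi hj pj; elim: k => [|k IH]; first by rewrite !PS0.
move: IH; rewrite !PS_succ nth_mv //.
have [->|ki] := eqVneq k i.
  rewrite ltnSn ltnn.
  have h1 : (j < i.+1) = (j < i) by apply/idP/idP; move/eqP: ij; lia.
  rewrite h1; case: (j < i) => /=; lia.
have [->|kj] := eqVneq k j.
  rewrite ?eqxx ?(negbTE ki) ltnSn ltnn.
  have h1 : (i < j.+1) = (i < j) by apply/idP/idP; move/eqP: ij; lia.
  rewrite h1; case: (i < j) => /=; lia.
rewrite ?(negbTE ki) ?(negbTE kj).
have h1 : (i < k.+1) = (i < k) by apply/idP/idP; move/eqP: ki; lia.
have h2 : (j < k.+1) = (j < k) by apply/idP/idP; move/eqP: kj; lia.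
rewrite h1 h2; case: (i < k); case: (j < k) => /=; lia.
Qed.

Definition srt (s : seq nat) := forall a b, a <= b -> b < size s -> nth 0 s b <= nth 0 s a.

Fixpoint msum (s : seq nat) n := if n is n'.+1 then msum s n' + PS s n' else 0.

Lemma msum_le s t n : (forall k, PS s k <= PS t k) -> msum s n <= msum t n.
Proof. move=> h; elim: n => //= n IH; have := h n; lia. Qed.

Lemma msum_lt s t n k : (forall k, PS s k <= PS t k) -> k < n -> PS s k < PS t k ->
  msum s n < msum t n.
Proof.
move=> h; elim: n => // n IH kn hk /=.
case: (k =P n) => [E|kn'].
  subst k; have := @msum_le s t n h; lia.
have := IH ltac:(lia) hk; have := h n; lia.
Qed.

Lemma nth_le_sumn s k : nth 0 s k <= sumn s.
Proof. elim: s k => [|x s IH] [|k] //=; [lia | have := IH k; lia]. Qed.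

Lemma sumn_mv s i j : i != j -> i < size s -> j < size s -> 0 < nth 0 s j ->
  sumn (mv s i j) = sumn s.
Proof.
move=> ij hi hj pj; have := @PS_mv s i j (size s) ij hi hj pj.
rewrite !PS_over ?size_mv //; rewrite hi hj /=; lia.
Qed.

Lemma PS_eq_nth v t : size v = size t -> (forall k, k <= size v -> PS v k = PS t k) -> v = t.
Proof.
move=> hs h; apply: (@eq_from_nth _ 0) => // k hk.
have := h k.+1 hk; have := h k (ltnW hk); rewrite !PS_succ; lia.
Qed.

Lemma bry v t : size v = size t -> srt v -> srt t -> (forall k, PS v k <= PS t k) ->
  sumn v = sumn t -> v <> t ->
  exists i j, i < j /\ j < size v /\ 0 < nth 0 v j /\ nth 0 v j <= nth 0 v i /\
    srt (mv v i j) /\ (forall k, PS (mv v i j) k <= PS t k) /\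
    msum v (size v).+1 < msum (mv v i j) (size v).+1.
Proof.
move=> hs sv st hle hsum hne.
have ex1 : exists k, PS v k < PS t k.
  case: (boolP [exists k : 'I_(size v).+1, PS v k < PS t k]).
    by move/existsP => [k hk]; exists k.
  move=> /existsPn hn; exfalso; apply: hne; apply: PS_eq_nth => // k hk.
  have := hn (Ordinal (hk : k < (size v).+1)); have := hle k; rewrite /= -leqNgt; lia.
pose k0 := ex_minn ex1.
have hk0 : PS v k0 < PS t k0 by rewrite /k0; case: ex_minnP.
have mk0 : forall k, PS v k < PS t k -> k0 <= k by rewrite /k0; case: ex_minnP.
have k0p : 0 < k0 by move: hk0; case: (k0) => //; rewrite !PS0.
have k0s : k0 < size v.
  rewrite ltnNge; apply/negP => h; move: hk0; rewrite !PS_over -?hs //; lia.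
have ex2 : exists k, (k0 < k) && (PS v k == PS t k).
  by exists (size v); rewrite k0s /= !PS_over -?hs // hsum.
pose k1 := ex_minn ex2.
have hk1 : (k0 < k1) && (PS v k1 == PS t k1) by rewrite /k1; case: ex_minnP.
have mk1 : forall k, (k0 < k) && (PS v k == PS t k) -> k1 <= k by rewrite /k1; case: ex_minnP.
move: hk1 => /andP [k01 /eqP e1].
have k1s : k1 <= size v by apply: mk1; rewrite k0s /= !PS_over -?hs // hsum.
have Da : forall k, k < k0 -> PS v k = PS t k.
  move=> k hk; apply/eqP; rewrite eqn_leq hle /= leqNgt; apply/negP => h.
  by have := mk0 k h; lia.
have Db : forall k, k0 <= k < k1 -> PS v k < PS t k.
  move=> k /andP [h1 h2]; have := hle k; rewrite leq_eqVlt => /orP [/eqP E|] //.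
  case: (k =P k0) => [Ek|nk]; first by move: hk0; rewrite -Ek E; lia.
  by have := mk1 k; rewrite E eqxx andbT; lia.
have Dc : PS v k1.+1 <= PS t k1.+1 := hle k1.+1.
move: (Da k0.-1 ltac:(lia)) (PS_succ v k0.-1) (PS_succ t k0.-1).
rewrite prednK // => ea ev1 et1.
move: (Db k1.-1 ltac:(lia)) (PS_succ v k1.-1) (PS_succ t k1.-1).
rewrite prednK; last lia.
move=> eb ev2 et2.
have vi_lt_ti : nth 0 v k0.-1 < nth 0 t k0.-1 by lia.
have tj_lt_vj : nth 0 t k1.-1 < nth 0 v k1.-1 by lia.
clearbody k0 k1.
have [i ei] : exists i, k0 = i.+1 by exists k0.-1; lia.
have [j ej] : exists j, k1 = j.+1 by exists k1.-1; lia.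
subst k0 k1; rewrite /= in vi_lt_ti tj_lt_vj.
have ij : i < j by lia.
have js : j < size v by lia.
have ijn : i != j by apply/eqP; lia.
have vji : nth 0 v j <= nth 0 v i by apply: sv => //; lia.
have pj : 0 < nth 0 v j by lia.
have Fa : forall a, a < i -> (nth 0 v i).+1 <= nth 0 v a.
  move=> a ha.
  have h1 : nth 0 v i.-1 <= nth 0 v a by apply: sv; lia.
  have h2 : nth 0 t i <= nth 0 t i.-1 by apply: st; lia.
  move: (Da i.-1 ltac:(lia)) (Da i ltac:(lia)) (PS_succ v i.-1) (PS_succ t i.-1).
  rewrite prednK; last lia.
  lia.
have Fb : forall b, j < b -> b < size v -> (nth 0 v b).+1 <= nth 0 v j.
  move=> b hb1 hb2.
  have h1 : nth 0 v b <= nth 0 v j.+1 by apply: sv; lia.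
  have h2 : nth 0 t j.+1 <= nth 0 t j by apply: st; lia.
  have h3 : nth 0 v j.+1 <= nth 0 t j.+1 by move: Dc; rewrite (PS_succ v j.+1) (PS_succ t j.+1) e1; lia.
  lia.
exists i, j; split => //; split => //; split => //; split => //; split; [|split].
- move=> a b hab hb; rewrite size_mv ?(ltn_trans ij js) // in hb.
  rewrite !nth_mv //.
  have hva := sv a b hab hb.
  case: (b =P i) => [Eb|nb]; case: (a =P i) => [Ea|na];
   case: (b =P j) => [Eb'|nb']; case: (a =P j) => [Ea'|na'] //=; (try subst a); (try subst b); try lia.
  + by have := Fa a ltac:(lia); lia.
  + by have := Fb b ltac:(lia) hb; lia.
- move=> k; have := @PS_mv v i j k ijn (ltn_trans ij js) js pj; have := hle k.
  case: (ltnP i k) => hik; case: (ltnP j k) => hjk /=; try lia.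
  have := Db k ltac:(lia); lia.
- apply: (@msum_lt _ _ _ i.+1).
  + move=> k; have := @PS_mv v i j k ijn (ltn_trans ij js) js pj.
    case: (ltnP i k) => hik; case: (ltnP j k) => hjk /=; lia.
  + lia.
  + have := @PS_mv v i j i.+1 ijn (ltn_trans ij js) js pj.
    rewrite ltnSn /= (_ : j < i.+1 = false) /=; [lia | apply/negbTE; rewrite -leqNgt; lia].
Qed.

Local Open Scope fset_scope.

Definition cnt (G : {fset {fset nat}}) (x : nat) := #|` [fset S in G | x \in S]|.

Lemma filt_U1 (T : {fset nat}) (H : {fset {fset nat}}) x : T \notin H ->
  #|` [fset S in T |` H | x \in S]| = ((x \in T) + #|` [fset S in H | x \in S]|)%N.
Proof.
move=> TH; case: (boolP (x \in T)) => xT.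
  have -> : [fset S in T |` H | x \in S] = T |` [fset S in H | x \in S].
    by apply/fsetP => S; rewrite !inE; case: (S =P T) => [->|]; rewrite ?xT.
  by rewrite cardfsU1 !inE (negbTE TH).
have -> : [fset S in T |` H | x \in S] = [fset S in H | x \in S].
  by apply/fsetP => S; rewrite !inE; case: (S =P T) => [->|]; rewrite ?(negbTE xT) ?andbF.
by [].
Qed.

Lemma filt_D1 (R : {fset nat}) (G : {fset {fset nat}}) x : R \in G ->
  #|` [fset S in G | x \in S]| = ((x \in R) + #|` [fset S in G `\ R | x \in S]|)%N.
Proof.
move=> RG; rewrite -filt_U1 ?inE ?eqxx //; congr #|` _|.
apply/fsetP => S; rewrite !inE; case: (S =P R) => [->|] //=.
by rewrite RG.
Qed.

Lemma cnt_swap (G : {fset {fset nat}}) R T x : R \in G -> T \notin G ->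
  (cnt (T |` (G `\ R)) x + (x \in R) = cnt G x + (x \in T))%N.
Proof.
move=> RG TG; rewrite /cnt filt_U1; last by rewrite !inE negb_and TG orbT.
rewrite (@filt_D1 R G x RG).
move: (#|` _|) => c; case: (x \in T); case: (x \in R) => /=; lia.
Qed.

Lemma filt_split (G : {fset {fset nat}}) (P Q : {fset nat} -> bool) :
  #|` [fset S in G | P S]| = (#|` [fset S in G | P S && Q S]| + #|` [fset S in G | P S && ~~ Q S]|)%N.
Proof.
rewrite -(cardfsID [fset S in G | Q S] [fset S in G | P S]); congr (_ + _)%N; congr #|` _|;
 apply/fsetP => S; rewrite !inE; by case: (S \in G); case: (P S); case: (Q S).
Qed.

Lemma card_split (X : {fset {fset nat}}) (Q : {fset nat} -> bool) :
  #|` X| = (#|` [fset S in X | Q S]| + #|` [fset S in X | ~~ Q S]|)%N.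
Proof.
rewrite -(cardfsID [fset S in X | Q S] X); congr (_ + _)%N; congr #|` _|;
 apply/fsetP => S; rewrite !inE; by case: (S \in X); case: (Q S).
Qed.

Definition sw p q (S : {fset nat}) : {fset nat} := q |` (S `\ p).

Lemma sw_inj p q : {in [pred S : {fset nat} | (p \in S) && (q \notin S)] &, injective (sw p q)}.
Proof.
move=> S T /andP [pS qS] /andP [pT qT] E.
apply/fsetP => x; have := congr1 (fun U => x \in U) E; rewrite /sw !inE.
case: (x =P p) => [->|]; first by rewrite pS pT.
case: (x =P q) => [->|]; first by rewrite (negbTE qS) (negbTE qT).
by [].
Qed.

Lemma core G m n p q : has_shape m n G -> p != q -> 0 < q -> (cnt G q + 2 <= cnt G p)%N ->
  exists G1 G2, G1 <> G2 /\ has_shape m n G1 /\ has_shape m n G2 /\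
   (forall x, cnt G1 x + (x == p) = cnt G x + (x == q))%N /\
   (forall x, cnt G2 x + (x == p) = cnt G x + (x == q))%N.
Proof.
move=> [cG sG] npq q0 hc.
set A := [fset S in G | (p \in S) && (q \notin S)].
set B := [fset S in G | (q \in S) && ~~ (p \in S)].
set C := [fset S in G | (p \in S) && (q \in S)].
have cp : cnt G p = (#|` C| + #|` A|)%N by rewrite /cnt (filt_split G _ (fun S => q \in S)).
have cq : cnt G q = (#|` [fset S in G | (q \in S) && (p \in S)]| + #|` B|)%N
  by rewrite /cnt (filt_split G _ (fun S => p \in S)).
have eC : [fset S in G | (q \in S) && (p \in S)] = C.
  by rewrite /C; apply/fsetP => S; rewrite !inE; case: (q \in S); case: (p \in S); rewrite ?andbT ?andbF.
rewrite eC in cq.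
set V := [fset S in A | sw p q S \notin G].
set W := [fset S in A | ~~ (sw p q S \notin G)].
have cA : #|` A| = (#|` V| + #|` W|)%N by rewrite (card_split A (fun S => sw p q S \notin G)).
have WB : #|` W| <= #|` B|.
  have <- : #|` sw p q @` W| = #|` W|.
    apply/eqP/card_in_imfsetP => S T; rewrite !inE => /andP[/andP[_ HS] _] /andP[/andP[_ HT] _].
    by apply: sw_inj.
  apply: fsubset_leq_card; apply/fsubsetP => U /imfsetP [S]; rewrite !inE /= negbK.
  move=> /andP [/andP [SG /andP [pS qS]] swG] ->; rewrite swG /sw !inE eqxx /=.
  by rewrite eqxx (negbTE npq).
have cV : 2 <= #|` V| by lia.
have [R1 R1V] : exists R, R \in V.
  by apply/fset0Pn; rewrite -cardfs_gt0; lia.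
have [R2 R2V] : exists R, R \in V `\ R1.
  apply/fset0Pn; rewrite -cardfs_gt0; move: cV; rewrite (cardfsD1 R1 V) R1V; lia.
move: R2V; rewrite in_fsetD1 => /andP [nR21 R2V].
have good : forall R, R \in V -> exists G', has_shape m n G' /\
   (forall x, cnt G' x + (x == p) = cnt G x + (x == q))%N /\ G' = sw p q R |` (G `\ R).
  move=> R; rewrite !inE => /andP [/andP [RG /andP [pR qR]] swG].
  exists (sw p q R |` (G `\ R)); split; last split => //.
  - split.
      rewrite cardfsU1 !inE negb_and swG orbT /=.
      move: cG; rewrite (cardfsD1 R G) RG /=; lia.
    move=> S; rewrite !inE => /orP [/eqP ->|/andP [_ SG]]; last exact: sG.
    have [cR zR] := sG R RG.
    rewrite /sw cardfsU1 !inE (negbTE qR) andbF /= -cR (cardfsD1 p R) pR.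
    split => //; rewrite (negbTE zR) andbF orbF; apply/eqP => E; move: q0; by rewrite -E.
  - move=> x; have := @cnt_swap G R (sw p q R) x RG swG; rewrite /sw !inE.
    case: (x =P p) => [->|xp]; first by rewrite pR (negbTE npq) /=; lia.
    case: (x =P q) => [->|xq] /=; first by rewrite (negbTE qR); lia.
    by case: (x \in R) => /=; lia.
have [G1 [sh1 [c1 e1]]] := good R1 R1V.
have [G2 [sh2 [c2 e2]]] := good R2 R2V.
exists G1, G2; split => //.
move=> E; have : R2 \in G1.
  rewrite e1 !inE nR21 /=; move: R2V; rewrite !inE => /andP [/andP [-> _] _]; by rewrite orbT.
rewrite E e2 !inE eqxx /= orbF => /eqP E2.
move: R2V; rewrite !inE => /andP [/andP [_ /andP [pR _]] _].
by move: pR; rewrite E2 /sw !inE eqxx /= orbF (negbTE npq).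
Qed.

Definition Pinv K m n v := exists G, has_shape m n G /\
  forall x, 0 < x <= K -> cnt G x = conj_part v x.

Lemma step K m n v i j : i < j -> j < size v -> 0 < nth 0 v j -> nth 0 v j <= nth 0 v i ->
  sumn v <= K -> Pinv K m n v ->
  exists G1 G2, G1 <> G2 /\ has_shape m n G1 /\ has_shape m n G2 /\
   (forall x, 0 < x <= K -> cnt G1 x = conj_part (mv v i j) x) /\
   (forall x, 0 < x <= K -> cnt G2 x = conj_part (mv v i j) x).
Proof.
move=> ij js pj ji sK [G [sh hc]].
have ijn : i != j by apply/eqP; lia.
have is_ : i < size v by lia.
have qK : (nth 0 v i).+1 <= K.
  have := nth_le_sumn (mv v i j) i; rewrite sumn_mv // nth_mv // eqxx; lia.
have cq := hc (nth 0 v i).+1 ltac:(lia).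
have cp := hc (nth 0 v j) ltac:(lia).
have gap := @conj_gap v i j ijn is_ js pj ji.
have npq : nth 0 v j != (nth 0 v i).+1 by apply/eqP; lia.
have [G1 [G2 [ne [s1 [s2 [c1 c2]]]]]] := @core G m n _ _ sh npq ltac:(lia) ltac:(lia).
exists G1, G2; do 3 (split => //); split.
- move=> x hx; have := c1 x; have := @conj_mv v i j x ijn is_ js pj ltac:(lia); rewrite hc //.
  move: (nat_of_bool _) (nat_of_bool _) => b1 b2; lia.
- move=> x hx; have := c2 x; have := @conj_mv v i j x ijn is_ js pj ltac:(lia); rewrite hc //.
  move: (nat_of_bool _) (nat_of_bool _) => b1 b2; lia.
Qed.

Lemma reach K m n t d : forall v, msum t (size v).+1 - msum v (size v).+1 <= d ->
  size v = size t -> srt v -> srt t -> (forall k, PS v k <= PS t k) -> sumn v = sumn t ->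
  sumn v <= K -> v <> t -> Pinv K m n v ->
  exists G1 G2, G1 <> G2 /\ has_shape m n G1 /\ has_shape m n G2 /\
   (forall x, 0 < x <= K -> cnt G1 x = conj_part t x) /\
   (forall x, 0 < x <= K -> cnt G2 x = conj_part t x).
Proof.
elim: d => [|d IH] v hd hs sv st hle hsum hK hne hP;
 have [i [j [ij [js [pj [ji [smv [hmv hms]]]]]]]] := @bry v t hs sv st hle hsum hne.
  have := @msum_le _ _ (size v).+1 hmv; lia.
have [G1 [G2 [ne [s1 [s2 [c1 c2]]]]]] := @step K m n v i j ij js pj ji hK hP.
have ijn : i != j by apply/eqP; lia.
have is_ : i < size v by lia.
case: (mv v i j =P t) => [E|NE].
  by exists G1, G2; rewrite -E.
have szm := @size_mv v i j is_ js.
have smm := @sumn_mv v i j ijn is_ js pj.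
apply: (IH (mv v i j)) => //; rewrite ?szm ?smm //.
- have := @msum_le _ _ (size v).+1 hmv; lia.
- by exists G1.
Qed.

Lemma conj_big (l : seq nat) x : largest_part l < x -> conj_part l x = 0.
Proof.
rewrite /conj_part /largest_part; elim: l => [|y l IH] //= h.
rewrite IH; last by move: h; rewrite gtn_max => /andP [].
by move: h; rewrite gtn_max => /andP [h1 _]; rewrite leqNgt (leq_trans h1) // leqnn.
Qed.

Lemma largest_le_sumn l : largest_part l <= sumn l.
Proof. rewrite /largest_part; elim: l => //= y l IH; rewrite geq_max; apply/andP; split; lia. Qed.

Lemma normalize m n la F K : has_shape m n F -> has_type la F -> largest_part la <= K ->
  Pinv K m n la.
Proof.
move=> [cF sF] ht aK.
set a := largest_part la.
pose f x := if x <= a then x else (x + K)%N.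
have finj : injective f.
  move=> x y; rewrite /f; case: (leqP x a); case: (leqP y a); lia.
pose T (S : {fset nat}) := f @` S.
have Tinj : injective T.
  move=> S1 S2 E; apply/fsetP => x.
  by rewrite -(@mem_imfset imfset_key _ _ f _ finj) -[in RHS](@mem_imfset imfset_key _ _ f _ finj) -/(T S1) -/(T S2) E.
exists (T @` F); split.
  split; first by rewrite card_imfset.
  move=> S' /imfsetP [S SF ->]; have [cS zS] := sF S SF; split.
    by rewrite /T card_imfset.
  have f0 : f 0 = 0 by rewrite /f leq0n.
  by rewrite /T -f0 (@mem_imfset imfset_key _ _ f _ finj).
move=> x /andP [x0 xK]; rewrite /cnt.
case: (leqP x a) => xa.
  have fx : f x = x by rewrite /f xa.
  have -> : [fset S' in T @` F | x \in S'] = T @` [fset S in F | x \in S].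
    apply/fsetP => S'; rewrite !inE; apply/andP/imfsetP.
      move=> [/imfsetP [S SF ->] xS]; exists S => //.
      by rewrite !inE SF /=; move: xS; rewrite /T -{1}fx (@mem_imfset imfset_key _ _ f _ finj).
    move=> [S]; rewrite !inE => /andP [SF xS] ->; split; first by apply/imfsetP; exists S.
    by rewrite /T -fx (@mem_imfset imfset_key _ _ f _ finj).
  rewrite card_imfset //; apply: ht; rewrite -/a; lia.
rewrite conj_big // -/a.
have -> : [fset S' in T @` F | x \in S'] = fset0.
  apply/fsetP => S'; rewrite !inE; apply/negP => /andP [/imfsetP [S _ ->] /imfsetP [y _ E]].
  move: E; rewrite /f; case: (leqP y a) => hy; lia.
by rewrite cardfs0.
Qed.

Lemma srt_sorted s : sorted geq s -> srt s.
Proof.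
move=> hs a b hab hb.
have tr : transitive geq by move=> y x z h1 h2; exact: leq_trans h2 h1.
have := @sorted_leq_nth _ geq tr (fun x => leqnn x) 0 s hs a b.
rewrite !inE => h; apply: h => //; lia.
Qed.

Lemma PS_nseq0 r k : PS (nseq r 0) k = 0.
Proof. rewrite /PS; elim: r k => [|r IH] [|k] //=; by rewrite ?take0 ?IH. Qed.

Lemma PS_pad s r k : PS (s ++ nseq r 0) k = PS s k.
Proof.
rewrite /PS; elim: s k => [|x s IH] [|k] //=; rewrite ?take0 //.
  exact: PS_nseq0.
by rewrite IH.
Qed.

Lemma PS_le_sumn s k : PS s k <= sumn s.
Proof. by rewrite /PS -{2}(cat_take_drop k s) sumn_cat leq_addr. Qed.

Lemma conj_pad s r x : 0 < x -> conj_part (s ++ nseq r 0) x = conj_part s x.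
Proof. by move=> x0; rewrite /conj_part count_cat count_nseq /= leqn0 (negbTE (lt0n_neq0 x0)) mul0n addn0. Qed.

Theorem proposition5p1 (m n : nat) (la mu : seq nat) :
  is_partition la -> is_partition mu ->
  (exists F : {fset {fset nat}}, has_shape m n F /\ has_type la F) ->
  strictly_dominates mu la ->
  exists F1 F2 : {fset {fset nat}},
    F1 <> F2 /\ has_shape m n F1 /\ has_type mu F1 /\
    has_shape m n F2 /\ has_type mu F2.
Proof.
move=> /andP [sla pla] /andP [smu pmu] [F [shF tF]] [[hsum hdom] hne].
set K := sumn la.
set L := size la.
have hsz : size mu <= L.
  rewrite leqNgt; apply/negP => h.
  have h1 := hdom L; rewrite take_size in h1.
  have h2 := PS_succ mu L; have h3 := PS_le_sumn mu L.+1.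
  have h4 : 0 < nth 0 mu L by move/allP: pmu; apply; exact: mem_nth.
  move: h1; rewrite -/(PS mu L) -/K; lia.
set t := mu ++ nseq (L - size mu) 0.
have st : size t = L by rewrite size_cat size_nseq; lia.
have srtt : srt t.
  move=> a b hab hb; rewrite /t !nth_cat.
  case: (ltnP b (size mu)) => hb'.
    rewrite (leq_ltn_trans hab hb'); exact: (@srt_sorted mu smu a b hab hb').
  by rewrite nth_nseq; case: ifP.
have hle : forall k, PS la k <= PS t k by move=> k; rewrite PS_pad; exact: hdom.
have sumt : sumn t = sumn la by rewrite sumn_cat sumn_nseq mul0n addn0.
have tne : la <> t.
  move=> E; apply: hne; move: E; rewrite /t; case E': (L - size mu) => [|r].
    by rewrite cats0.
  move=> E; exfalso; move/allP: pla => /(_ 0); rewrite E mem_cat mem_nseq /= orbT => /(_ isT).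
  by [].
have hP : Pinv K m n la by apply: (@normalize m n la F K shF tF); exact: largest_le_sumn.
have [G1 [G2 [ne [s1 [s2 [c1 c2]]]]]] :=
  @reach K m n t _ la (leqnn _) (esym st) (@srt_sorted la sla) srtt hle (esym sumt) (leqnn _) tne hP.
have aK : largest_part mu <= K by rewrite /K -hsum; exact: largest_le_sumn.
exists G1, G2; split => //; split => //; split; last split => //.
- move=> x /andP [x1 x2]; have := c1 x; rewrite /cnt conj_pad; [move=> -> //; lia | lia].
- move=> x /andP [x1 x2]; have := c2 x; rewrite /cnt conj_pad; [move=> -> //; lia | lia].
Qed.
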